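(* For $n\ge 2$ and $1\le m\le n$, $$s_u(n,m)\le\frac{(n-1)!}{(m-1)!}\big(H(n-1)\big)^{m-1},$$ where $s_u(n,m)$ are the unsigned Stirling numbers of the first kind and $H(N)=\sum_{i=1}^N\frac1i$. *)

(* Defs.v *)
From mathcomp Require Import all_boot all_order all_algebra.
Set Implicit Arguments. Unset Strict Implicit. Unset Printing Implicit Defensive.
Import Order.TTheory GRing.Theory Num.Theory.

Fixpoint stirling1u (n k : nat) : nat :=
  match n, k with
  | 0, 0 => 1
  | 0, _.+1 => 0
  | _.+1, 0 => 0
  | n'.+1, k'.+1 => n' * stirling1u n' k + stirling1u n' k'
  end.

Local Open Scope ring_scope.

Definition harmonic (N : nat) : rat := \sum_(1 <= i < N.+1) (i%:R)^-1.

(* Main.v *)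
Require Import Defs.
From mathcomp Require Import all_boot all_order all_algebra.
From mathcomp Require Import ring lra.
Import Order.TTheory GRing.Theory Num.Theory.
Local Open Scope ring_scope.

Lemma stir_n1 n : stirling1u n.+1 1 = n`!.
Proof.
elim: n => [//|n IH].
have -> : stirling1u n.+2 1 = (n.+1 * stirling1u n.+1 1 + stirling1u n.+1 0)%N by [].
have -> : stirling1u n.+1 0 = 0%N by [].
by rewrite IH addn0 factS.
Qed.

Lemma stir_0k k : stirling1u 1 k.+2 = 0%N.
Proof. by []. Qed.

Lemma harmS n : harmonic n.+1 = harmonic n + (n.+1%:R)^-1.
Proof. by rewrite /harmonic big_nat_recr. Qed.

Lemma harm_ge0 n : 0 <= harmonic n.
Proof. by rewrite /harmonic; apply: sumr_ge0 => i _; rewrite invr_ge0 ler0n. Qed.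

Lemma bern (H a : rat) j : 0 <= H -> 0 <= a ->
  H ^+ j.+1 + (j.+1)%:R * a * H ^+ j <= (H + a) ^+ j.+1.
Proof.
move=> H0 a0; elim: j => [|j IH].
  by rewrite !expr1 expr0 mulr1 mul1r.
rewrite [(H + a) ^+ j.+2]exprS.
apply: le_trans (ler_wpM2l (addr_ge0 H0 a0) IH).
have h1 : 0 <= a * H ^+ j.+1 by rewrite mulr_ge0 // exprn_ge0.
have h2 : 0 <= a * ((j.+1)%:R * a * H ^+ j) by rewrite !mulr_ge0 // exprn_ge0.
have -> : (H + a) * (H ^+ j.+1 + (j.+1)%:R * a * H ^+ j) =
  H ^+ j.+2 + (j.+2)%:R * a * H ^+ j.+1 + a * ((j.+1)%:R * a * H ^+ j).
  rewrite !exprS -[(j.+2)%:R]natr1 -[(j.+1)%:R]natr1; ring.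
by rewrite lerDl.
Qed.

Lemma key n k : (stirling1u n.+1 k.+1)%:R <=
  (n`!)%:R * harmonic n ^+ k / (k`!)%:R :> rat.
Proof.
elim: n k => [|n IH] k.
  case: k => [|k]; first by rewrite expr0 mulr1.
  by rewrite stir_0k /= mulr0n; apply: mulr_ge0; rewrite ?invr_ge0 ?ler0n //
       mulr_ge0 // exprn_ge0 // harm_ge0.
case: k => [|j].
  by rewrite stir_n1 expr0 mulr1 fact0 invr1 mulr1.
have -> : stirling1u n.+2 j.+2 = (n.+1 * stirling1u n.+1 j.+2 + stirling1u n.+1 j.+1)%N by [].
rewrite natrD natrM.
set H := harmonic n.
set c : rat := (n.+1)%:R.
set F : rat := (n`!)%:R.
set K : rat := (j`!)%:R.
have c0 : 0 < c by rewrite ltr0n.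
have F0 : 0 < F by rewrite ltr0n fact_gt0.
have K0 : 0 < K by rewrite ltr0n fact_gt0.
have H0 : 0 <= H by apply: harm_ge0.
have J0 : 0 < (j.+1)%:R :> rat by rewrite ltr0n.
apply: le_trans (lerD (ler_wpM2l (ltW c0) (IH j.+1)) (IH j)) _.
rewrite harmS -/H (factS n) (factS j) !natrM -/c -/F -/K.
have -> : c * (F * H ^+ j.+1 / ((j.+1)%:R * K)) + F * H ^+ j / K =
   (c * F / ((j.+1)%:R * K)) * (H ^+ j.+1 + (j.+1)%:R * c^-1 * H ^+ j).
  field; rewrite !gt_eqF // addrC natr1 ltr0n //.
rewrite [X in _ <= X]mulrAC.
apply: ler_wpM2l; first by apply: ltW; rewrite !(mulr_gt0, invr_gt0).
by apply: bern => //; rewrite invr_ge0 ltW.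
Qed.

Theorem lemma5p1 (n m : nat) (hn : (2 <= n)%N) (hm1 : (1 <= m)%N) (hmn : (m <= n)%N) :
  (stirling1u n m)%:R <=
    ((n.-1)`!)%:R / ((m.-1)`!)%:R * (harmonic n.-1) ^+ m.-1 :> rat.
Proof.
case: n hn hmn => [//|n] _ _; case: m hm1 => [//|m] _ /=.
by rewrite mulrAC; apply: key.
Qed.
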